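(* (Symmetry extension lemma.) Let $H$ and $L$ be linear subspaces of $\mathbb{R}^n$ such that $H\cap L^\perp=\{o\}$ and $\dim H<\dim L$. If $E\subset S^{n-1}$ is nonempty, closed, invariant under $R_H$, and invariant under every element of $O(n)_{L^\perp}$, then $E$ is invariant under every element of $O(n)_{(H+L)^\perp}$. The same conclusion holds if invariance under $R_H$ is replaced by invariance under $R_{H^\perp}$.
   Context: For a linear subspace $S$ of $\mathbb{R}^n$, $O(n)_S$ is the pointwise stabilizer of $S$ in $O(n)$ (isometries in $O(n)$ acting as the identity on $S$), $S^\perp$ is its orthogonal complement, and $R_S$ is the reflection $x\mapsto 2(x|S)-x$ with $x|S$ the orthogonal projection onto $S$. A set $E$ is invariant under $\phi$ if $\phi E=E$. $o$ is the origin, $S^{n-1}$ the unit sphere, $H+L$ the vector sum. *)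

(* Defs.v *)
From HB Require Import structures.
From mathcomp Require Import all_boot all_order all_algebra.
From mathcomp Require Import all_classical all_reals all_analysis.
Set Implicit Arguments. Unset Strict Implicit. Unset Printing Implicit Defensive.
Import Order.TTheory GRing.Theory Num.Theory numFieldNormedType.Exports.
Local Open Scope ring_scope.
Local Open Scope classical_set_scope.

Section Defs.
Variables (R : realType) (n : nat).
Local Notation V := 'rV[R]_n.

Definition dotv (x y : V) : R := (x *m y^T) 0 0.

Definition orthc (S : set V) : set V := [set x | forall y, S y -> dotv x y = 0].

Definition oproj (S : set V) (x : V) : V :=
  xget 0 [set p | S p /\ orthc S (x - p)].

Definition reflS (S : set V) (x : V) : V := 2%:R *: oproj S x - x.

Definition usphere : set V := [set x | dotv x x = 1].

(* O(n) : orthogonal matrices, acting on row vectors by x |-> x *m Q *)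
Definition orthmx (Q : 'M[R]_n) : Prop := Q *m Q^T = 1%:M.

Definition stabO (S : set V) (Q : 'M[R]_n) : Prop :=
  orthmx Q /\ forall x, S x -> x *m Q = x.

Definition is_invariant (phi : V -> V) (E : set V) : Prop := phi @` E = E.

End Defs.

(* Main.v *)
Require Import Defs.
From HB Require Import structures.
From mathcomp Require Import all_boot all_order all_algebra.
From mathcomp Require Import all_classical all_reals all_analysis.
From mathcomp Require Import ring lra zify.
Import Order.TTheory GRing.Theory Num.Theory numFieldNormedType.Exports.
Local Open Scope ring_scope.
Set Implicit Arguments. Unset Strict Implicit.

Section Dot.
Variables (R : realType) (n : nat).
Local Notation V := 'rV[R]_n.
Local Notation dot := (@dotv R n).

Lemma dotvE (x y : V) : dot x y = \sum_i x 0 i * y 0 i.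
Proof. by rewrite /dotv mxE; apply: eq_bigr => i _; rewrite mxE. Qed.

Lemma dotvC (x y : V) : dot x y = dot y x.
Proof. by rewrite !dotvE; apply: eq_bigr => i _; rewrite mulrC. Qed.

Lemma dotvDl (x y z : V) : dot (x + y) z = dot x z + dot y z.
Proof. by rewrite !dotvE -big_split; apply: eq_bigr => i _; rewrite mxE mulrDl. Qed.

Lemma dotvZl a (x y : V) : dot (a *: x) y = a * dot x y.
Proof. by rewrite !dotvE mulr_sumr; apply: eq_bigr => i _; rewrite mxE mulrA. Qed.

Lemma dotvNl (x y : V) : dot (- x) y = - dot x y.
Proof. by rewrite -scaleN1r dotvZl mulN1r. Qed.

Lemma dotvBl (x y z : V) : dot (x - y) z = dot x z - dot y z.
Proof. by rewrite dotvDl dotvNl. Qed.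

Lemma dotv0l (x : V) : dot 0 x = 0.
Proof. by rewrite -(scale0r 0) dotvZl mul0r. Qed.

Lemma dotvDr (x y z : V) : dot x (y + z) = dot x y + dot x z.
Proof. by rewrite dotvC dotvDl !(dotvC x). Qed.
Lemma dotvZr a (x y : V) : dot x (a *: y) = a * dot x y.
Proof. by rewrite dotvC dotvZl dotvC. Qed.
Lemma dotvNr (x y : V) : dot x (- y) = - dot x y.
Proof. by rewrite dotvC dotvNl dotvC. Qed.
Lemma dotvBr (x y z : V) : dot x (y - z) = dot x y - dot x z.
Proof. by rewrite dotvC dotvBl !(dotvC x). Qed.
Lemma dotv0r (x : V) : dot x 0 = 0.
Proof. by rewrite dotvC dotv0l. Qed.

Lemma dotv_ge0 (x : V) : 0 <= dot x x.
Proof. by rewrite dotvE; apply: sumr_ge0 => i _; rewrite -expr2 sqr_ge0. Qed.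

Lemma dotv_eq0 (x : V) : dot x x = 0 -> x = 0.
Proof.
rewrite dotvE => /psumr_eq0P H; apply/rowP => j; rewrite mxE.
have := H (fun i _ => (ltac:(by rewrite -expr2 sqr_ge0))) j isT => /eqP.
by rewrite mulf_eq0 orbb => /eqP.
Qed.

Lemma dotv_gt0 (x : V) : x != 0 -> 0 < dot x x.
Proof.
move=> x0; rewrite lt_def dotv_ge0 andbT; apply/eqP => /dotv_eq0 h.
by rewrite h eqxx in x0.
Qed.

Lemma dotv_mulmx (x y : V) (Q : 'M[R]_n) : dot (x *m Q) y = dot x (y *m Q^T).
Proof. by rewrite /dotv trmx_mul trmxK mulmxA. Qed.

Lemma dotv_CS (x y : V) : dot x y ^+ 2 <= dot x x * dot y y.
Proof.
have [->|x0] := eqVneq x 0.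
  by rewrite !dotv0l expr0n /= mul0r.
have hx := @dotv_gt0 x x0.
set t := dot x y / dot x x.
have h := dotv_ge0 (y - t *: x).
rewrite !(dotvBl, dotvBr, dotvZl, dotvZr) (dotvC y x) in h.
have e : t * dot x x = dot x y by rewrite /t divfK // gt_eqF.
set a := dot x x in hx e h *; set b := dot x y in e h *; set c := dot y y in h *.
have h2 : 0 <= c - t * b by move: h; rewrite -e; lra.
have : 0 <= a * (c - t * b) by apply: mulr_ge0; lra.
rewrite mulrBr mulrA (mulrC a t) e => h3.
rewrite expr2; lra.
Qed.

End Dot.


Section Proj.
Variables (R : realType) (n : nat).
Local Notation V := 'rV[R]_n.
Local Notation dot := (@dotv R n).

Definition isproj (U : {vspace V}) (x p : V) :=
  p \in U /\ forall u, u \in U -> dot (x - p) u = 0.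



Lemma prj_span (s : seq V) (x : V) : exists p, isproj (span s) x p.
Proof.
elim: s x => [|a s IH] x.
  exists 0; split; first exact: mem0v.
  by move=> u; rewrite span_nil memv0 => /eqP ->; rewrite dotv0r.
have [pa [pas hpa]] := IH a; have [px [pxs hpx]] := IH x.
set a' := a - pa.
have ha' : forall u, u \in (span s) -> dot a' u = 0 by [].
set lam := dot (x - px) a' / dot a' a'.
have key : forall y, dot y a' = 0 -> (forall u, u \in (span s) -> dot y u = 0) ->
    forall u, u \in (span (a :: s)) -> dot y u = 0.
  move=> y y1 y2 u; rewrite span_cons => /memv_addP [u1 /vlineP [k ->] [u2 u2s ->]].
  rewrite dotvDr dotvZr (y2 _ u2s) addr0.
  have -> : a = a' + pa by rewrite /a' subrK.
  by rewrite dotvDr y1 (y2 _ pas) addr0 mulr0.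
have sub : {subset span s <= span (a :: s)} by apply/subvP; rewrite span_cons addvSr.
have [a0|a0] := eqVneq a' 0.
  exists px; split; first exact: (sub _ pxs).
  apply: key; last exact: hpx.
  by rewrite a0 dotv0r.
exists (lam *: a' + px); split.
  apply: memvD; last exact: (sub _ pxs).
  apply: memvZ; apply: memvB; first exact: memv_span (mem_head _ _).
  exact: (sub _ pas).
apply: key.
  rewrite opprD addrA addrAC dotvBl dotvZl /lam divfK.
    by rewrite subrr.
  by rewrite gt_eqF // dotv_gt0.
move=> u us; rewrite opprD addrA addrAC dotvBl dotvZl hpx //.
by rewrite ha' // mulr0 subrr.
Qed.

Lemma prj_ex (U : {vspace V}) (x : V) : exists p, isproj U x p.
Proof. by rewrite -(span_basis (vbasisP U)); apply: prj_span. Qed.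

Definition prj (U : {vspace V}) (x : V) : V := xget 0 [set p | isproj U x p].

Lemma projP U x : isproj U x (prj U x).
Proof. exact: (xgetPex 0 (prj_ex U x)). Qed.

Lemma prj_mem U x : prj U x \in U.
Proof. by case: (projP U x). Qed.

Lemma prj_orth (U : {vspace V}) x u : u \in U -> dot (x - prj U x) u = 0.
Proof. by case: (projP U x) => _; apply. Qed.

Lemma isproj_uniq U x p q : isproj U x p -> isproj U x q -> p = q.
Proof.
move=> [pU hp] [qU hq]; apply/eqP; rewrite -subr_eq0; apply/eqP/dotv_eq0.
have d : p - q \in U by apply: memvB.
have e : p - q = (x - q) - (x - p) by rewrite opprB [RHS]addrC addrA subrK.
by rewrite {1}e dotvBl hp // hq // subrr.
Qed.

Lemma prj_uniq U x p : isproj U x p -> prj U x = p.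
Proof. by move=> h; apply: (isproj_uniq (projP U x) h). Qed.

Lemma prj_id (U : {vspace V}) x : x \in U -> prj U x = x.
Proof. by move=> xU; apply: prj_uniq; split => // u _; rewrite subrr dotv0l. Qed.

Lemma prj_linear U : linear (prj U).
Proof.
move=> a x y; apply: prj_uniq; split.
  by apply: memvD; [apply: memvZ|]; apply: prj_mem.
move=> u uU.
have -> : a *: x + y - (a *: prj U x + prj U y) =
   a *: (x - prj U x) + (y - prj U y).
  by rewrite scalerBr opprD !addrA; congr (_ - _); rewrite addrAC.
by rewrite dotvDl dotvZl !prj_orth // mulr0 addr0.
Qed.

HB.instance Definition _ U := GRing.isLinear.Build R V V *:%R (prj U) (prj_linear U).

Definition Pf U : 'End(V) := linfun (prj U).
Lemma PfE U x : Pf U x = prj U x.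
Proof. by rewrite /Pf lfunE. Qed.

Lemma orthc_orthc (U : {vspace V}) z :
  (forall y, (forall u, u \in U -> dot y u = 0) -> dot z y = 0) -> z \in U.
Proof.
move=> h; have : z - prj U z = 0.
  apply: dotv_eq0; rewrite {1}dotvBl (dotvC (prj U z)) prj_orth ?prj_mem // subr0.
  by apply: h => u uU; apply: prj_orth.
by move/eqP; rewrite subr_eq0 => /eqP ->; apply: prj_mem.
Qed.

End Proj.


Section HH.
Variables (R : realType) (n : nat).
Local Notation V := 'rV[R]_n.
Local Notation dot := (@dotv R n).

Definition goodm (a : V -> V) :=
  [/\ forall c x y, a (x + c *: y) = a x + c *: a y,
      forall x y, dot (a x) (a y) = dot x y &
      forall x, a (a x) = x].

Lemma goodm0 a : goodm a -> a 0 = 0.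
Proof.
case=> l _ _; have := l 1 0 0; rewrite scaler0 addr0 scale1r.
by move/(congr1 (fun z => z - a 0)); rewrite subrr addrK.
Qed.

Lemma goodmB a x y : goodm a -> a (x - y) = a x - a y.
Proof. by move=> g; case: (g) => l _ _; rewrite -scaleN1r l scaleN1r. Qed.

Lemma goodmZ a c x : goodm a -> a (c *: x) = c *: a x.
Proof. by move=> g; case: (g) => l _ _; rewrite -[c *: x]add0r l goodm0 // add0r. Qed.

Lemma goodmD a x y : goodm a -> a (x + y) = a x + a y.
Proof. by move=> g; case: (g) => l _ _; rewrite -[y]scale1r l !scale1r. Qed.

Definition hh (v x : V) : V := x - (2 * dot x v / dot v v) *: v.

Definition Qm (v : V) : 'M[R]_n := 1%:M - (2 / dot v v) *: (v^T *m v).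

Lemma hh_mx v x : x *m Qm v = hh v x.
Proof.
rewrite /Qm /hh mulmxBr mulmx1 -scalemxAr mulmxA [x *m v^T]mx11_scalar.
by rewrite mul_scalar_mx scalerA mulrAC.
Qed.

Lemma trQm v : (Qm v)^T = Qm v.
Proof. by rewrite /Qm linearB /= trmx1 linearZ /= trmx_mul trmxK. Qed.

Lemma dotvv_eq0 (v : V) : dot v v = 0 -> v = 0.
Proof. exact: dotv_eq0. Qed.

Lemma hh_invol v x : hh v (hh v x) = x.
Proof.
have [->|v0] := eqVneq v 0.
  by rewrite /hh !dotv0r !mulr0 !mul0r !scale0r !subr0.
have vv : dot v v != 0 by rewrite gt_eqF // dotv_gt0.
rewrite {1}/hh /hh dotvBl dotvZl.
set c := 2 * dot x v / dot v v.
have -> : 2 * (dot x v - c * dot v v) / dot v v = - c.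
  by rewrite /c; field.
by rewrite scaleNr opprK subrK.
Qed.

Lemma hh_dot v x y : dot (hh v x) (hh v y) = dot x y.
Proof.
have [->|v0] := eqVneq v 0.
  by rewrite /hh !dotv0r !mulr0 !mul0r !scale0r !subr0.
have vv : dot v v != 0 by rewrite gt_eqF // dotv_gt0.
rewrite /hh !(dotvBl, dotvBr, dotvZl, dotvZr).
rewrite (dotvC v y).
by field.
Qed.

Lemma hh_good v : goodm (hh v).
Proof.
split; [|exact: hh_dot|exact: hh_invol].
by move=> c x y; rewrite -!hh_mx mulmxDl scalemxAl.
Qed.

Lemma conj_good a w x : goodm a -> a (hh w (a x)) = hh (a w) x.
Proof.
move=> g; case: (g) => _ d i.
rewrite /hh goodmB // goodmZ // i d; congr (_ - (_ * _ / _) *: _).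
by rewrite -[in RHS](i x) d.
Qed.

Lemma hh_swap x y : dot x x = dot y y -> hh (x - y) x = y.
Proof.
move=> e; have [xy|xy] := eqVneq (dot x x - dot x y) 0.
  have : x - y = 0.
    apply: dotv_eq0; rewrite !(dotvBl, dotvBr) (dotvC y x) -e.
    by move/eqP: xy; rewrite subr_eq0 => /eqP ->; rewrite !subrr.
  by move/eqP; rewrite subr_eq0 => /eqP ->; rewrite subrr /hh dotv0r !mulr0 mul0r scale0r subr0.
rewrite /hh !(dotvBl, dotvBr) (dotvC y x) -e.
have d2 : dot x x - dot x y - (dot x y - dot x x) = 2 * (dot x x - dot x y) by ring.
rewrite d2 divff; last by rewrite mulf_neq0 // pnatr_eq0.
by rewrite scale1r opprB addrC subrK.
Qed.

Lemma hh_fix v z : dot z v = 0 -> hh v z = z.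
Proof. by move=> h; rewrite /hh h mulr0 mul0r scale0r subr0. Qed.

Lemma orthmx_Qm v : orthmx (Qm v).
Proof.
rewrite /orthmx trQm; apply/row_matrixP => i.
by rewrite !rowE mulmxA !hh_mx hh_invol mulmx1.
Qed.

End HH.


Section Bound.
Variables (R : realType) (n : nat).
Local Notation V := 'rV[R]_n.
Local Notation dot := (@dotv R n).

Lemma mx_bound (A : 'M[R]_n) : exists2 C, 0 <= C &
  forall x : V, dot (x *m A) (x *m A) <= C * dot x x.
Proof.
pose c (j : 'I_n) : V := (col j A)^T.
exists (\sum_j dot (c j) (c j)); first by apply: sumr_ge0 => j _; apply: dotv_ge0.
move=> x; rewrite (dotvE (x *m A)) mulr_suml; apply: ler_sum => j _.
have e : (x *m A) 0 j = dot x (c j).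
  by rewrite mxE dotvE; apply: eq_bigr => i _; rewrite !mxE.
by rewrite e -expr2 mulrC; apply: dotv_CS.
Qed.

Lemma lfun_bound (f : 'End(V)) : exists2 C, 0 <= C &
  forall x : V, dot (f x) (f x) <= C * dot x x.
Proof.
have [C C0 hC] := mx_bound (lin1_mx f).
by exists C => // x; rewrite -(mul_rV_lin1 f x).
Qed.

Definition F (us : seq V) (x : V) : V := foldr (fun u y => hh u y) x us.

Lemma F_dot us x y : dot (F us x) (F us y) = dot x y.
Proof. by elim: us => //= u us IH; rewrite hh_dot. Qed.

Lemma F_B us x y : F us (x - y) = F us x - F us y.
Proof. by elim: us => //= u us IH; rewrite IH goodmB //; apply: hh_good. Qed.

Lemma F_cat us vs x : F (us ++ vs) x = F us (F vs x).
Proof. by rewrite /F foldr_cat. Qed.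

Lemma F_inv us x : F (rev us) (F us x) = x.
Proof.
elim: us x => //= u us IH x.
by rewrite rev_cons -cats1 F_cat /= hh_invol IH.
Qed.

Lemma F_inv' us x : F us (F (rev us) x) = x.
Proof. by rewrite -{1}(revK us) F_inv. Qed.

Lemma F_mem (M : {vspace V}) us x : all (fun u => u \in M) us -> x \in M -> F us x \in M.
Proof.
elim: us => //= u us IH /andP [uM uf] xM.
by rewrite /hh; apply: memvB; [apply: IH|apply: memvZ].
Qed.

End Bound.


Section Main.
Variables (R : realType) (n : nat).
Local Notation V := 'rV[R]_n.
Local Notation dot := (@dotv R n).
Variables (H L : {vspace V}) (E : set V) (s : R).
Hypothesis hs : s * s = 1.
Hypothesis hHL : forall x, x \in H -> (forall y, y \in L -> dot x y = 0) -> x = 0.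
Hypothesis hdim : (\dim H < \dim L)%N.

Definition Rm : 'M[R]_n := s *: (2%:R *: lin1_mx (prj H) - 1%:M).
Definition Rf := @mulmxr R 1 n n Rm.

Lemma RfE x : Rf x = s *: (2%:R *: prj H x - x).
Proof.
by rewrite /Rf /= /Rm -scalemxAr mulmxBr mulmx1 -scalemxAr mul_rV_lin1.
Qed.

Lemma RfB x y : Rf (x - y) = Rf x - Rf y.
Proof. by rewrite /Rf /= mulmxBl. Qed.
Lemma RfD x y : Rf (x + y) = Rf x + Rf y.
Proof. by rewrite /Rf /= mulmxDl. Qed.
Lemma RfZ c x : Rf (c *: x) = c *: Rf x.
Proof. by rewrite /Rf /= scalemxAl. Qed.

Lemma Rf_dot x y : dot (Rf x) (Rf y) = dot x y.
Proof.
rewrite !RfE dotvZl dotvZr mulrA hs mul1r.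
have e1 : dot (prj H x) y = dot (prj H x) (prj H y).
  have := prj_orth y (prj_mem H x); rewrite dotvBl (dotvC y) (dotvC (prj H y)).
  by move/eqP; rewrite subr_eq0 => /eqP.
have e2 : dot x (prj H y) = dot (prj H x) (prj H y).
  have := prj_orth x (prj_mem H y); rewrite dotvBl.
  by move/eqP; rewrite subr_eq0 => /eqP.
rewrite !(dotvBl, dotvBr, dotvZl, dotvZr) e1 e2; ring.
Qed.

Lemma prj_Rf x : prj H (Rf x) = s *: prj H x.
Proof.
rewrite RfE linearZ /= linearB /= linearZ /= prj_id ?prj_mem //.
by congr (_ *: _); rewrite scaler_nat mulr2n addrK.
Qed.

Lemma Rf_invol x : Rf (Rf x) = x.
Proof.
rewrite [in LHS]RfE prj_Rf RfE scalerA mulrC -scalerA -scalerBr scalerA hs scale1r.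
by rewrite opprB addrC subrK.
Qed.

Lemma Rf_good : goodm Rf.
Proof.
split; [|exact: Rf_dot|exact: Rf_invol].
by move=> c x y; rewrite RfD RfZ.
Qed.


Lemma e_ex : exists2 e, e \in L & (e != 0) && (prj H e == 0).
Proof.
have hd := limg_ker_dim (Pf H) L.
have sub : (Pf H @: L <= H)%VS.
  by apply/subvP => y /memv_imgP [x xL ->]; rewrite PfE prj_mem.
have d1 := dimvS sub.
have : (L :&: lker (Pf H))%VS != 0%VS.
  rewrite -dimv_eq0; apply/eqP => h; rewrite h in hd.
  rewrite add0n in hd; rewrite hd in d1.
  by rewrite leqNgt hdim in d1.
rewrite -vpick0 => nz.
have := memv_pick (L :&: lker (Pf H))%VS; rewrite memv_cap memv_ker PfE => /andP [eL e0].
by exists (vpick (L :&: lker (Pf H))%VS) => //; rewrite nz.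
Qed.

Definition M := (H + L)%VS.
Definition Lp := (linfun Rf @: L)%VS.

Lemma LpP u : u \in Lp -> Rf u \in L.
Proof. by move=> /memv_imgP [l lL ->]; rewrite lfunE Rf_invol. Qed.

Lemma LpI u : Rf u \in L -> u \in Lp.
Proof.
move=> h; rewrite -(Rf_invol u).
have -> : Rf (Rf u) = linfun Rf (Rf u) by rewrite lfunE.
by apply: memv_img.
Qed.

Lemma LM u : u \in L -> u \in M.
Proof. by move=> h; move/subvP: (addvSr H L); apply. Qed.

Lemma HM u : u \in H -> u \in M.
Proof. by move=> h; move/subvP: (addvSl H L); apply. Qed.

Lemma LpM u : u \in Lp -> u \in M.
Proof.
move=> /memv_imgP [l lL ->].
have -> : linfun Rf l = Rf l by rewrite lfunE.
rewrite RfE.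
by apply: memvZ; apply: memvB; [apply: memvZ; apply: HM; apply: prj_mem|apply: LM].
Qed.

Lemma M_sub u : u \in M -> u \in (Lp + L)%VS.
Proof.
move=> /memv_addP [h hH [l lL ->]].
suff : h \in (Lp + L)%VS.
  by move=> hs'; apply: memvD => //; move/subvP: (addvSr Lp L); apply.
set K := (Pf H @: L)%VS.
have KH : forall y, y \in K -> y \in H.
  by move=> y /memv_imgP [x xL ->]; rewrite PfE prj_mem.
have hK : h \in K.
  have r0 : h - prj K h = 0.
    apply: hHL; first by apply: memvB => //; apply: KH; apply: prj_mem.
    move=> y yL.
    have e : dot (h - prj K h) y = dot (h - prj K h) (prj H y).
      have := prj_orth y (memvB hH (KH _ (prj_mem K h))).
      rewrite dotvBl (dotvC y) (dotvC (prj H y)).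
      by move/eqP; rewrite subr_eq0 => /eqP.
    rewrite e prj_orth //.
    by rewrite -PfE; apply: memv_img.
  by move/eqP: r0; rewrite subr_eq0 => /eqP ->; apply: prj_mem.
move/memv_imgP: hK => [l0 l0L ->]; rewrite PfE.
have -> : prj H l0 = (s / 2%:R) *: Rf l0 + (1 / 2%:R) *: l0.
  apply/rowP => i; rewrite RfE !mxE.
  set p := prj H l0 0 i; set q := l0 0 i.
  have -> : s / 2%:R * (s * (2%:R * p - q)) = (s * s) * (2%:R * p - q) / 2%:R by ring.
  by rewrite hs mul1r; field.
apply: memv_add; first by apply: memvZ; apply: LpI; rewrite Rf_invol.
by apply: memvZ.
Qed.


Hypothesis hR : forall x, E x -> E (Rf x).
Hypothesis hL : forall v, v \in L -> forall x, E x -> E (hh v x).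

Definition G0 (u : V) := (u \in L) || (Rf u \in L).

Definition W (w : V) := exists2 us, all G0 us & exists2 l, l \in L & w = F us l.

Lemma G0_M u : G0 u -> u \in M.
Proof. by case/orP => h; [apply: LM|apply: LpM; apply: LpI]. Qed.

Lemma G0_E u x : G0 u -> E x -> E (hh u x).
Proof.
case/orP => h Ex; first exact: hL.
rewrite -(Rf_invol u) -conj_good; last exact: Rf_good.
by apply: hR; apply: hL => //; apply: hR.
Qed.

Lemma W_E w x : W w -> E x -> E (hh w x).
Proof.
case=> us; elim: us w x => [|u us IH] w x /=.
  by move=> _ [l lL ->] Ex; apply: hL.
move=> /andP [gu gus] [l lL ->] Ex.
rewrite -conj_good; last exact: hh_good.
apply: G0_E => //; apply: (IH (F us l)) => //; first by exists l.
exact: G0_E.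
Qed.

Lemma W_L u : u \in L -> W u.
Proof. by move=> h; exists [::] => //; exists u. Qed.

Lemma W_cons u w : G0 u -> W w -> W (hh u w).
Proof. by move=> g [us gus [l lL ->]]; exists (u :: us); [rewrite /= g|exists l]. Qed.

Lemma W_Lp u : Rf u \in L -> W u.
Proof.
move=> hu; have [e eL /andP [e0 pe]] := e_ex.
have Ree : Rf e = - s *: e.
  by rewrite RfE (eqP pe) scaler0 sub0r scalerN scaleNr.
have ge : 0 < dot e e by apply: dotv_gt0.
set k := Num.sqrt (dot u u / dot e e).
have hk : dot (k *: e) (k *: e) = dot u u.
  rewrite dotvZl dotvZr mulrA -expr2 sqr_sqrtr; last by rewrite divr_ge0 // ?dotv_ge0 // ltW.
  by rewrite divfK // gt_eqF.
rewrite -(hh_swap hk); apply: W_cons; last by apply: W_L; apply: memvZ.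
apply/orP; right; rewrite RfB RfZ Ree scalerA; apply: memvB => //; apply: memvZ.
by [].
Qed.

Lemma par_ineq (a b : V) : dot (a - b) (a - b) <= 2%:R * dot a a + 2%:R * dot b b.
Proof.
have := dotv_ge0 (a + b).
rewrite !(dotvBl, dotvBr, dotvDl, dotvDr) (dotvC b a); lra.
Qed.

Lemma band : exists2 dl, 0 < dl & forall l w, l \in L -> w \in M ->
  dot (w - l) (w - l) <= dl * dot l l -> W w.
Proof.
have [C C0 hC] := lfun_bound (addv_pi1 Lp L).
have [e eL /andP [e0 pe]] := e_ex.
have Ree : Rf e = - s *: e.
  by rewrite RfE (eqP pe) scaler0 sub0r scalerN scaleNr.
have ge : 0 < dot e e by apply: dotv_gt0.
exists (1 / (4%:R * (C + 1))); first by rewrite divr_gt0 // mulr_gt0 //; lra.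
move=> l w lL wM hd.
set d := w - l.
have dM : d \in M by apply: memvB => //; apply: LM.
set d1 := addv_pi1 Lp L d; set d2 := addv_pi2 Lp L d.
have d12 : d1 + d2 = d by apply: addv_pi1_pi2; apply: M_sub.
have d1L : Rf d1 \in L by apply: LpP; apply: memv_pi1.
have d2L : d2 \in L by apply: memv_pi2.
set dl := 1 / (4%:R * (C + 1)) in hd.
have dl0 : 0 < dl by rewrite divr_gt0 // mulr_gt0 //; lra.
have hX : (4%:R * (C + 1)) * dl = 1.
  by rewrite /dl mul1r mulfV // gt_eqF // mulr_gt0 //; lra.
have Cdl : C * dl <= 1 / 4%:R by nra.
have dl4 : dl <= 1 / 4%:R by nra.
have A1 : dot d1 d1 <= dot l l / 4%:R.
  apply: (le_trans (hC d)); apply: (le_trans (y := C * (dl * dot l l))).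
    by apply: ler_wpM2l.
  rewrite mulrA; have := dotv_ge0 l; nra.
have A2 : dot l l / 4%:R <= dot w w.
  have := par_ineq w d; rewrite /d opprB addrC subrK => h.
  have := dotv_ge0 l; nra.
set A := dot d1 d1; set B := dot d1 e; set Ee := dot e e; set W2 := dot w w.
set Dl := B ^+ 2 + Ee * (W2 - A).
have AW : A <= W2 by exact: le_trans A1 A2.
have D0 : 0 <= Dl by rewrite /Dl; apply: addr_ge0; [exact: sqr_ge0|apply: mulr_ge0; [exact: ltW|(idtac; lra)]].
set r := Num.sqrt Dl.
have hr : r ^+ 2 = Dl by apply: sqr_sqrtr.
set t := (r - B) / Ee.
have ht : Ee * t = r - B by rewrite /t mulrC divfK // gt_eqF.
set w' := d1 + t *: e.
have hw' : dot w' w' = dot w w.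
  rewrite /w' !(dotvDl, dotvDr, dotvZl, dotvZr) (dotvC e d1) -/A -/B -/Ee -/W2.
  apply: (mulfI (x := Ee)); first by rewrite gt_eqF.
  have -> : Ee * (A + t * B + (t * B + t * (t * Ee))) = Ee * A + 2%:R * B * (Ee * t) + (Ee * t) ^+ 2 by ring.
  rewrite ht.
  have -> : Ee * A + 2%:R * B * (r - B) + (r - B) ^+ 2 = Ee * A + r ^+ 2 - B ^+ 2 by ring.
  rewrite hr /Dl; ring.
have Ww' : W w'.
  apply: W_Lp; rewrite /w' RfD RfZ Ree scalerA; apply: memvD => //; exact: memvZ.
have -> : w = hh (w' - w) w' by rewrite hh_swap.
apply: W_cons => //; apply/orP; left.
have -> : w' - w = t *: e - (l + d2).
  rewrite /w' -[w](subrK l) -/d -d12.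
  apply/rowP => i; rewrite !mxE; ring.
by apply: memvB; [apply: memvZ|apply: memvD].
Qed.


Lemma step dl : (forall l w, l \in L -> w \in M -> dot (w - l) (w - l) <= dl * dot l l -> W w) ->
  forall p q, W p -> q \in M -> dot (q - p) (q - p) <= dl * dot p p -> W q.
Proof.
move=> hb p q [us gus [l lL ->]] qM hq.
have gM : all (fun u => u \in M) (rev us).
  by rewrite all_rev; apply: sub_all gus => u; apply: G0_M.
have : W (F (rev us) q).
  apply: (hb l) => //; first exact: F_mem.
  rewrite -{1 2}(F_inv us l) -F_B F_dot.
  by rewrite F_dot in hq.
move=> [us' gus' [l' l'L e']].
exists (us ++ us'); first by rewrite all_cat gus.
by exists l' => //; rewrite F_cat -e' F_inv'.
Qed.

Lemma all_W v : v \in M -> W v.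
Proof.
move=> vM; have [->|v0] := eqVneq v 0; first by apply: W_L; exact: mem0v.
have [dl dl0 hb] := band.
have [e eL /andP [e0 _]] := e_ex.
pose e1 := if 0 <= dot e v then e else - e.
have e1L : e1 \in L by rewrite /e1; case: ifP => _ //; rewrite memvN.
have e1v : 0 <= dot e1 v.
  rewrite /e1; case: ifP => h //; rewrite dotvNl oppr_ge0.
  by move/negbT: h; rewrite -ltNge => /ltW.
have e1e : dot e1 e1 = dot e e by rewrite /e1; case: ifP => _ //; rewrite dotvNl dotvNr opprK.
have ge : 0 < dot e e by apply: dotv_gt0.
have gv : 0 < dot v v by apply: dotv_gt0.
pose m := if dot e e <= dot v v then dot e e else dot v v.
have mE : m <= dot e e by rewrite /m; case: ifP => h //; move/negbT: h; rewrite -ltNge => /ltW.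
have mV : m <= dot v v by rewrite /m; case: ifP => h //.
have m0 : 0 < m by rewrite /m; case: ifP.
set Dv := dot (v - e1) (v - e1).
have Dv0 : 0 <= Dv by apply: dotv_ge0.
set X := 2%:R * Dv / (dl * m).
have X0 : 0 <= X by rewrite /X divr_ge0 // ?mulr_ge0 // ltW // mulr_gt0.
set K := (Num.Def.archi_bound X).+1.
set Kr : R := K%:R.
have hK : X < Kr.
  apply: (lt_le_trans (archi_boundP X0)).
  by rewrite /Kr /K ler_nat.
have K1 : 1 <= Kr by rewrite /Kr /K ler1n.
have K0 : Kr != 0 by rewrite gt_eqF //; lra.
pose p (k : nat) := (1 - k%:R / Kr) *: e1 + (k%:R / Kr) *: v.
have pM : forall k, p k \in M.
  by move=> k; apply: memvD; apply: memvZ => //; apply: LM.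
have claim : forall k, (k <= K)%N -> W (p k).
  elim=> [_|k IH hk].
    have -> : p 0%N = e1 by rewrite /p mul0r subr0 scale1r scale0r addr0.
    exact: W_L.
  apply: (step hb (IH (ltnW hk)) (pM _)).
  have -> : p k.+1 - p k = (1 / Kr) *: (v - e1).
    by apply/rowP => i; rewrite !mxE -addn1 natrD; field.
  rewrite dotvZl dotvZr.
  set t := k%:R / Kr.
  have t0 : 0 <= t by rewrite /t divr_ge0 // ?ler0n //; lra.
  have t1 : t <= 1.
    rewrite /t ler_pdivrMr; last lra.
    by rewrite mul1r /Kr ler_nat ltnW.
  have -> : dot (p k) (p k) = (1 - t) ^+ 2 * dot e e + 2%:R * (1 - t) * t * dot e1 v + t ^+ 2 * dot v v.
    rewrite /p -/t !(dotvDl, dotvDr, dotvZl, dotvZr) e1e (dotvC v e1); ring.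
  have lowb : m / 2%:R <= (1 - t) ^+ 2 * dot e e + 2%:R * (1 - t) * t * dot e1 v + t ^+ 2 * dot v v.
    have h1 : 0 <= (1 - t) ^+ 2 * (dot e e - m) by apply: mulr_ge0; [apply: sqr_ge0|lra].
    have h2 : 0 <= t ^+ 2 * (dot v v - m) by apply: mulr_ge0; [apply: sqr_ge0|lra].
    have h3 : 0 <= (1 - t) * t * dot e1 v by apply: mulr_ge0 => //; apply: mulr_ge0; lra.
    have h4 : 0 <= m * (t - 1 / 2%:R) ^+ 2 by apply: mulr_ge0; [lra|apply: sqr_ge0].
    nra.
  apply: (le_trans _ (ler_wpM2l (ltW dl0) lowb)).
  have iK : 1 / Kr * (1 / Kr * Dv) = Dv / (Kr * Kr) by field.
  rewrite iK ler_pdivrMr; last by apply: mulr_gt0; lra.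
  have hK' : 2%:R * Dv < Kr * (dl * m).
    by move: hK; rewrite /X ltr_pdivrMr ?mulr_gt0 // mulrC.
  have dm : 0 < dl * m by apply: mulr_gt0.
  have : Kr * (dl * m) <= Kr * Kr * (dl * m) by rewrite ler_pM2r //; nra.
  nra.
have := claim K (leqnn K).
have -> : p K = v by rewrite /p divff // subrr scale0r add0r scale1r.
done.
Qed.

Lemma mainE v x : v \in M -> E x -> E (hh v x).
Proof. by move=> vM; apply: W_E; apply: all_W. Qed.

End Main.


Lemma inv_map (R : realType) n (f : 'rV[R]_n -> 'rV[R]_n) E x :
  is_invariant f E -> E x -> E (f x).
Proof. by move=> h Ex; rewrite -h; exists x. Qed.
Arguments inv_map {R n f E x}.

Unset Implicit Arguments. Set Strict Implicit.
Local Open Scope classical_set_scope.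

Theorem lemma3p7 (R : realType) (n : nat) (H L : {vspace 'rV[R]_n})
  (E : set 'rV[R]_n) :
  (forall x, x \in H -> orthc [set y | y \in L] x -> x = 0) ->
  (\dim H < \dim L)%N ->
  E `<=` usphere (R:=R) (n:=n) -> E !=set0 -> closed E ->
  (is_invariant (reflS [set y | y \in H]) E \/
   is_invariant (reflS (orthc [set y | y \in H])) E) ->
  (forall Q, stabO (orthc [set y | y \in L]) Q -> is_invariant (fun x => x *m Q) E) ->
  forall Q, stabO (orthc [set y | y \in (H + L)%VS]) Q ->
    is_invariant (fun x => x *m Q) E.
Proof.
move=> hHL hdim _ _ _ hrefl hQ Q [Qo Qfix].
have hL : forall v, v \in L -> forall x, E x -> E (hh v x).
  move=> v vL x Ex.
  have st : stabO (orthc [set y | y \in L]) (Qm v).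
    split; first exact: orthmx_Qm.
    by move=> z hz; rewrite hh_mx hh_fix //; apply: hz.
  rewrite -hh_mx; have := inv_map (hQ _ st) Ex; done.
have hmain : forall v x, v \in (H + L)%VS -> E x -> E (hh v x).
  case: hrefl => hr.
    have hs : (1 : R) * 1 = 1 by rewrite mulr1.
    apply: (mainE hs hHL hdim _ hL) => x Ex.
    have -> : Rf H 1 x = reflS [set y | y \in H] x.
      by rewrite RfE scale1r.
    exact: inv_map hr Ex.
  have hs : (-1 : R) * -1 = 1 by rewrite mulrNN mulr1.
  apply: (mainE hs hHL hdim _ hL) => x Ex.
  have -> : Rf H (-1) x = reflS (orthc [set y | y \in H]) x.
    rewrite RfE /reflS.
    have -> : oproj (orthc [set y | y \in H]) x = x - prj H x.
      apply: xget_unique.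
        split; first by move=> y yH; apply: prj_orth.
        move=> z hz; rewrite opprB addrC subrK dotvC; apply: hz; exact: prj_mem.
      move=> y [h1 h2].
      have qH : x - y \in H by apply: orthc_orthc => z hz; apply: h2.
      have : prj H x = x - y.
        by apply: prj_uniq; split => // u uH; rewrite opprB addrC subrK; apply: h1.
      by move=> ->; rewrite opprB addrC subrK.
    by apply/rowP => i; rewrite !mxE; ring.
  exact: inv_map hr Ex.
have key : forall Q', orthmx Q' ->
    (forall z, orthc [set y | y \in (H + L)%VS] z -> z *m Q' = z) ->
    forall x, E x -> E (x *m Q').
  move=> Q' Qo' Qf' x Ex.
  have QQ : forall z, orthc [set y | y \in (H + L)%VS] z -> z *m Q'^T = z.
    by move=> z hz; rewrite -{1}(Qf' z hz) -mulmxA Qo' mulmx1.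
  have yy : dotv x x = dotv (x *m Q') (x *m Q').
    by rewrite dotv_mulmx -mulmxA Qo' mulmx1.
  have yM : x - x *m Q' \in (H + L)%VS.
    apply: orthc_orthc => z hz.
    by rewrite dotvBl dotv_mulmx QQ // subrr.
  by rewrite -(hh_swap yy); apply: hmain.
apply/seteqP; split.
  by move=> _ [x Ex <-]; apply: key.
have QoT : orthmx Q^T by rewrite /orthmx trmxK; apply: mulmx1C.
have QfT : forall z, orthc [set y | y \in (H + L)%VS] z -> z *m Q^T = z.
  by move=> z hz; rewrite -{1}(Qfix z hz) -mulmxA Qo mulmx1.
move=> x Ex; exists (x *m Q^T); first exact: key.
by rewrite -mulmxA mulmx1C // mulmx1.
Qed.
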